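(* Let $(P+Q,\omega)$ be a labeled disjoint sum of posets and fix $s\in P$ such that $\omega(s) > \omega(t)$ for all $t\in Q$. Let $|P+Q|=n$ and $|P|=p$. Then \[ e_q^{\mathrm{maj}}(P+Q,\omega;s) = \binom{n-1}{p-1}_{q}\, e_q^{\mathrm{maj}}(P,\omega_1;s)\, e_q^{\mathrm{maj}}(Q,\omega_2), \] where $\omega_1,\omega_2$ are the restrictions of $\omega$ to $P$ and $Q$.
   Context: A labeled poset $(P,\omega)$ of size $n$ is a finite poset $P$ with a bijective labeling $\omega:P\to[n]$. For a linear extension $f:P\to[n]$ (an order-preserving bijection), the permutation $\omega\circ f^{-1}\in\mathfrak{S}_n$ is called a linear extension of the labeled poset; $\mathcal{L}(P,\omega)$ denotes the set of these. For $\sigma\in\mathfrak{S}_n$, $\mathrm{Des}(\sigma)=\{i\in[n-1]:\sigma_i>\sigma_{i+1}\}$ and $\mathrm{maj}(\sigma)=\sum_{i\in\mathrm{Des}(\sigma)} i$. Define $e_q^{\mathrm{maj}}(P,\omega)=\sum_{\sigma\in\mathcal{L}(P,\omega)}q^{\mathrm{maj}(\sigma)}$, and for fixed $s\in P$, $e_q^{\mathrm{maj}}(P,\omega;s)=\sum q^{\mathrm{maj}(\sigma)}$ summed over those $\sigma\in\mathcal{L}(P,\omega)$ that end with $\omega(s)$. Labels on $P$ and $Q$ are compared via the (order-preserving) relabelings induced by restricting $\omega$. The $q$-binomial coefficient is $\binom{m}{k}_q=\frac{[m]_q!}{[k]_q!\,[m-k]_q!}$ with $[m]_q=1+q+\cdots+q^{m-1}$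 and $[m]_q!=[m]_q\cdots[1]_q$. *)

(* Defs.v *)
From mathcomp Require Import all_boot all_order all_algebra.
Set Implicit Arguments. Unset Strict Implicit. Unset Printing Implicit Defensive.
Import GRing.Theory.
Local Open Scope ring_scope.

Definition is_poset (T : finType) (le : rel T) : Prop :=
  [/\ reflexive le, antisymmetric le & transitive le].

Definition sum_rel (P Q : finType) (leP : rel P) (leQ : rel Q) : rel (P + Q)%type :=
  fun x y => match x, y with
             | inl a, inl b => leP a b
             | inr a, inr b => leQ a b
             | _, _ => false
             end.

(* A linear extension of a poset (T, le), listed as the sequence
   f^{-1}(1), ..., f^{-1}(n) of elements of T. *)
Definition is_linext (T : finType) (le : rel T) (s : seq T) : bool :=
  [forall x, forall y, ((x != y) && le x y) ==> (index x s < index y s)%N].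

Definition linexts (T : finType) (le : rel T) : seq (seq T) :=
  [seq s <- permutations (enum T) | is_linext le s].

Definition maj (T : Type) (w : T -> nat) (s : seq T) : nat :=
  let ws := map w s in
  (\sum_(0 <= i < (size ws).-1 | nth 0 ws i.+1 < nth 0 ws i) i.+1)%N.

Definition emaj (T : finType) (le : rel T) (w : T -> nat) : {poly rat} :=
  \sum_(s <- linexts le) 'X^(maj w s).

Definition emaj_end (T : finType) (le : rel T) (w : T -> nat) (t : T) : {poly rat} :=
  \sum_(s <- linexts le | last t s == t) 'X^(maj w s).

(* order-preserving relabeling (standardization) of an injective labeling
   onto 1..|T| *)
Definition std (T : finType) (w : T -> nat) : T -> nat :=
  fun x => #|[set y | (w y < w x)%N]|.+1.

Definition qint (m : nat) : {poly rat} := \sum_(i < m) 'X^i.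
Definition qfact (m : nat) : {poly rat} := \prod_(1 <= i < m.+1) qint i.
Definition qbinom (m k : nat) : {poly rat} :=
  qfact m %/ (qfact k * qfact (m - k)).

(* Main.v *)
Require Import Defs.
From mathcomp Require Import all_boot all_order all_algebra ring zify.
From Stdlib Require Import Lia.
Set Implicit Arguments. Unset Strict Implicit. Unset Printing Implicit Defensive.
Import GRing.Theory Num.Theory.
Local Open Scope ring_scope.

Fixpoint rmaj (r : seq nat) : nat :=
  match r with
  | x :: t => (rmaj t + size t * (x < head 0%N t))%N
  | [::] => 0%N
  end.

Section Shuf.
Variable T : Type.
Fixpoint shuf (u v : seq T) {struct u} : seq (seq T) :=
  match u with
  | [::] => [:: v]
  | x :: u' =>
    let fix sv (v : seq T) : seq (seq T) :=
      match v with
      | [::] => [:: u]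
      | y :: v' => map (cons x) (shuf u' v) ++ map (cons y) (sv v')
      end in sv v
  end.

Lemma shuf0l v : shuf [::] v = [:: v]. Proof. by []. Qed.
Lemma shuf0r u : shuf u [::] = [:: u]. Proof. by case: u. Qed.
Lemma shufcc x u y v : shuf (x :: u) (y :: v) =
  map (cons x) (shuf u (y :: v)) ++ map (cons y) (shuf (x :: u) v).
Proof. by []. Qed.

End Shuf.

Lemma shuf_size (T : eqType) (u v : seq T) r :
  r \in shuf u v -> size r = (size u + size v)%N.
Proof.
elim: u v r => [|x u IHu] v r; first by rewrite shuf0l inE => /eqP->.
elim: v r => [|y v IHv] r; first by rewrite shuf0r inE addn0 => /eqP->.
rewrite shufcc mem_cat => /orP[] /mapP[r' Hr' ->] /=.
  by rewrite (IHu _ _ Hr').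
by rewrite (IHv _ Hr') /= !addnS.
Qed.

Lemma map_shuf (T U : Type) (f : T -> U) u v :
  shuf (map f u) (map f v) = map (map f) (shuf u v).
Proof.
elim: u v => [|x u IHu] v; first by [].
elim: v => [|y v IHv]; first by rewrite map_cons !shuf0r.
rewrite map_cons [in LHS]map_cons shufcc shufcc map_cat.
rewrite -(map_cons f y v) IHu -(map_cons f x u) IHv -!map_comp.
done.
Qed.
Fixpoint qb (m k : nat) : {poly rat} :=
  match m, k with
  | _, 0%N => 1
  | 0%N, _.+1 => 0
  | m'.+1, k'.+1 => qb m' k' + 'X^(k'.+1) * qb m' k'.+1
  end.

Lemma qb_gt m k : (m < k)%N -> qb m k = 0.
Proof.
elim: m k => [|m IH] [|k] //= H.
by rewrite !IH ?mulr0 ?addr0 // ltnW.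
Qed.

Lemma qbmm m : qb m m = 1.
Proof. by elim: m => //= m ->; rewrite qb_gt // mulr0 addr0. Qed.

Lemma qb0 m : qb m 0 = 1. Proof. by case: m. Qed.
Lemma qbSS m k : qb m.+1 k.+1 = qb m k + 'X^(k.+1) * qb m k.+1. Proof. by []. Qed.

Lemma qintD a b : qint (a + b) = qint a + 'X^a * qint b.
Proof.
rewrite /qint big_split_ord /= big_distrr /=; congr (_ + _).
by apply: eq_bigr => i _; rewrite exprD.
Qed.

Lemma qfact0 : qfact 0 = 1. Proof. by rewrite /qfact big_geq. Qed.
Lemma qfactS m : qfact m.+1 = qfact m * qint m.+1.
Proof. by rewrite /qfact big_nat_recr. Qed.

Lemma qint_neq0 m : qint m.+1 != 0.
Proof.
apply/negP => /eqP H.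
have : (qint m.+1).[1] = m.+1%:R.
  rewrite /qint horner_sum.
  under eq_bigr do rewrite hornerXn expr1n.
  by rewrite sumr_const card_ord.
by rewrite H horner0 => /eqP; rewrite eq_sym pnatr_eq0.
Qed.

Lemma qfact_neq0 m : qfact m != 0.
Proof.
elim: m => [|m IH]; first by rewrite qfact0 oner_neq0.
by rewrite qfactS mulf_neq0 // qint_neq0.
Qed.

Lemma qb_fact m k : (k <= m)%N -> qb m k * qfact k * qfact (m - k) = qfact m.
Proof.
elim: m k => [|m IH] [|k] //= Hk.
- by rewrite qfact0 !mul1r.
- by rewrite qfact0 !mul1r subn0.
- move: Hk; rewrite ltnS subSS; case: (ltngtP k m) => // Hkm _.
  + have E : (m - k = (m - k.+1).+1)%N by rewrite subnSK.
    have H1 := IH k (ltnW Hkm). have H2 := IH k.+1 Hkm.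
    transitivity ((qb m k * qfact k * qfact (m - k)) * qint k.+1 +
       'X^(k.+1) * (qb m k.+1 * qfact k.+1 * qfact (m - k.+1)) * qint (m - k)).
      move: E; set d := (m - k.+1)%N => E; rewrite E !qfactS. ring.
    rewrite H1 H2 qfactS.
    have -> : qint m.+1 = qint (k.+1 + (m - k)) by rewrite addSn subnKC // ltnW.
    rewrite qintD; ring.
  + subst k; rewrite (qb_gt (ltnSn m)) qbmm subnn qfact0. ring.
Qed.

Lemma qbinom_qb m k : (k <= m)%N -> qbinom m k = qb m k.
Proof.
move=> H; rewrite /qbinom -(qb_fact H) -mulrA mulpK //.
by rewrite mulf_neq0 // qfact_neq0.
Qed.

Lemma qbSS' m k : (k <= m)%N -> qb m.+1 k.+1 = 'X^(m - k) * qb m k + qb m k.+1.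
Proof.
move=> Hk.
apply: (@mulIf _ (qfact k.+1 * qfact (m - k))).
  by rewrite mulf_neq0 // qfact_neq0.
rewrite mulrA. rewrite -[(m - k)%N]/(m.+1 - k.+1)%N qb_fact // qfactS !subSS.
symmetry; move: Hk; case: (ltngtP k m) => // Hkm _.
- have E : (m - k = (m - k.+1).+1)%N by rewrite subnSK.
  have H1 := qb_fact (ltnW Hkm). have H2 := qb_fact Hkm.
  transitivity ('X^(m - k) * (qb m k * qfact k * qfact (m - k)) * qint k.+1 +
       (qb m k.+1 * qfact k.+1 * qfact (m - k.+1)) * qint (m - k)).
    move: E; set d := (m - k.+1)%N => E; rewrite E !qfactS. ring.
  rewrite H1 H2.
  have -> : qint m.+1 = qint ((m - k) + k.+1) by rewrite addnS subnK // ltnW.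
  rewrite qintD; ring.
- subst m; rewrite (qb_gt (ltnSn k)) qbmm subnn qfact0 expr0. rewrite qfactS; ring.
Qed.

Lemma rmajE x t : rmaj (x :: t) = (rmaj t + size t * (x < head 0%N t))%N.
Proof. by []. Qed.

Lemma Xb n (b : bool) : 'X^(n * b) = if b then 'X^n else 1 :> {poly rat}.
Proof. by case: b; rewrite ?muln1 ?muln0. Qed.

Lemma key a b x y z : x != y -> z != x -> z != y ->
  'X^((a + b).+2 * (z < x)) * (qb (a + b.+1) a * 'X^(b.+1 * (x < y))) +
  'X^((a + b).+2 * (z < y)) * (qb (a.+1 + b) a.+1 * 'X^(a.+1 * (y < x)))
  = qb (a.+1 + b.+1) a.+1 * 'X^(a.+1 * (z < x) + b.+1 * (z < y)).
Proof.
move=> nxy nzx nzy.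
have E1 : qb (a.+1 + b.+1) a.+1 = qb (a + b.+1) a + 'X^(a.+1) * qb (a + b.+1) a.+1.
  by rewrite addSn qbSS.
have E2 : qb (a.+1 + b.+1) a.+1 = 'X^(b.+1) * qb (a + b.+1) a + qb (a + b.+1) a.+1.
  by rewrite addSn qbSS' ?leq_addr // addKn.
rewrite addSnnS exprD !Xb.
have X2 : 'X^((a + b).+2) = 'X^(a.+1) * 'X^(b.+1) :> {poly rat}.
  by rewrite -exprD addSn addnS.
case: (ltngtP x y) nxy => // Hxy _; case: (ltngtP z x) nzx => // Hzx _;
  case: (ltngtP z y) nzy => // Hzy _.
all: try (exfalso; lia).
all: rewrite ?X2; first [rewrite E2; ring | rewrite E1; ring].
Qed.

Lemma sum_shift z x u v :
  \sum_(r <- shuf u v) 'X^(rmaj (z :: x :: r)) =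
  'X^((size u + size v).+1 * (z < x)) * \sum_(r <- shuf u v) 'X^(rmaj (x :: r)) :> {poly rat}.
Proof.
rewrite big_distrr big_seq [RHS]big_seq; apply: eq_bigr => r Hr.
by rewrite rmajE /= (shuf_size Hr) exprD mulrC.
Qed.

Theorem shuf_main z u v : uniq (z :: u ++ v) ->
  \sum_(r <- shuf u v) 'X^(rmaj (z :: r)) =
  qb (size u + size v) (size u) *
  'X^(rmaj u + rmaj v + size u * (z < head 0%N u) + size v * (z < head 0%N v)).
Proof.
elim: u z v => [|x u IHu] z v.
  by move=> _; rewrite shuf0l big_seq1 qb0 mul1r rmajE /=; congr (_ ^+ _); lia.
elim: v z => [|y v IHv] z.
  by move=> _; rewrite shuf0r big_seq1 (addn0 (size _)) qbmm mul1r rmajE /=; congr (_ ^+ _); lia.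
move=> Hu.
have Hz : uniq (x :: u ++ y :: v) by move: Hu; rewrite cons_uniq => /andP[].
have Hy : uniq (y :: (x :: u) ++ v).
  have P : perm_eq ((x :: u) ++ [:: y] ++ v) ([:: y] ++ (x :: u) ++ v) by rewrite perm_catCA.
  by rewrite -(perm_uniq P).
have Hzx : z != x.
  by apply: contraTneq Hu => ->; rewrite /= inE eqxx.
have Hzy : z != y.
  by apply: contraTneq Hu => ->; rewrite /= inE mem_cat inE eqxx !orbT.
have Hxy : x != y.
  by apply: contraTneq Hz => ->; rewrite /= mem_cat inE eqxx !orbT.
rewrite shufcc big_cat !big_map sum_shift sum_shift (IHu _ _ Hz) (IHv _ Hy).
rewrite !rmajE.
change (size (y :: v)) with (size v).+1; change (size (x :: u)) with (size u).+1.
change (head 0%N (y :: v)) with y; change (head 0%N (x :: u)) with x.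
set K := (rmaj u + size u * (x < head 0%N u) + (rmaj v + size v * (y < head 0%N v)))%N.
have -> : (rmaj u + (rmaj v + size v * (y < head 0%N v)) + size u * (x < head 0%N u) +
     (size v).+1 * (x < y) = K + (size v).+1 * (x < y))%N by rewrite /K; lia.
have -> : (rmaj u + size u * (x < head 0%N u) + rmaj v + (size u).+1 * (y < x) +
     size v * (y < head 0%N v) = K + (size u).+1 * (y < x))%N by rewrite /K; lia.
have -> : (rmaj u + size u * (x < head 0%N u) + (rmaj v + size v * (y < head 0%N v)) +
     (size u).+1 * (z < x) + (size v).+1 * (z < y) =
     K + ((size u).+1 * (z < x) + (size v).+1 * (z < y)))%N by rewrite /K; lia.
rewrite [in RHS](exprD _ K) [in RHS]mulrCA -(key (size u) (size v) Hxy Hzx Hzy) !(exprD _ K) !addnS !addSn.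
rewrite mulrDr; congr (_ + _).
all: ring.
Qed.

Definition Dm (ws : seq nat) : nat :=
  (\sum_(0 <= i < (size ws).-1 | nth 0 ws i.+1 < nth 0 ws i) i.+1)%N.

Lemma Dm_rcons ws z : Dm (rcons ws z) = (Dm ws + size ws * (z < last 0%N ws))%N.
Proof.
case: ws => [|x ws]; first by rewrite /Dm /= !big_geq.
rewrite /Dm size_rcons /= big_mkcond big_nat_recr //= [in RHS]big_mkcond /=.
congr (_ + _)%N.
  apply: eq_big_nat => i /andP[_ Hi].
  by rewrite -rcons_cons !nth_rcons /= Hi ltnS (ltnW Hi).
have E : nth 0%N (x :: ws) (size ws) = last x ws.
  by rewrite -[size ws]/((size (x::ws)).-1) nth_last.
rewrite -rcons_cons !nth_rcons /= ltnn eqxx ltnSn E.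
by case: (z < last x ws)%N; rewrite ?muln1 ?muln0.
Qed.

Lemma Dm_rmaj ws : Dm ws = rmaj (rev ws).
Proof.
elim/last_ind: ws => [|ws z IH]; first by rewrite /Dm big_geq.
rewrite Dm_rcons rev_rcons rmajE size_rev IH; congr (_ + _ * _)%N.
by case/lastP: ws {IH} => [|ws x] //; rewrite rev_rcons last_rcons.
Qed.

Lemma maj_rmaj (T : Type) (w : T -> nat) (S : seq T) : maj w S = rmaj (map w (rev S)).
Proof. by rewrite map_rev -Dm_rmaj. Qed.

Lemma rmaj_inv (T : Type) (f g : T -> nat) (s : seq T) :
  (forall x y, (f x < f y)%N = (g x < g y)%N) -> rmaj (map f s) = rmaj (map g s).
Proof.
move=> H; elim: s => [|x s IH] //=; rewrite IH !size_map; case: s {IH} => //= y s.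
by rewrite H.
Qed.

Lemma std_lt (U : finType) (w : U -> nat) x y : (std w x < std w y)%N = (w x < w y)%N.
Proof.
rewrite /std ltnS; case: (ltnP (w x) (w y)) => H.
  apply: proper_card; apply/properP; split.
    by apply/subsetP => z; rewrite !inE => Hz; exact: ltn_trans Hz H.
  by exists x; rewrite !inE ?ltnn.
apply/negbTE; rewrite -leqNgt; apply: subset_leq_card.
by apply/subsetP => z; rewrite !inE => Hz; exact: leq_trans Hz H.
Qed.

Lemma maj_std (U : finType) (w : U -> nat) S : maj (std w) S = maj w S.
Proof. by rewrite !maj_rmaj; apply: rmaj_inv => x y; rewrite std_lt. Qed.

Lemma perm_enumP (U : finType) (s : seq U) :
  perm_eq s (enum U) = uniq s && [forall x, x \in s].
Proof.
apply/idP/idP.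
  move=> H; rewrite (perm_uniq H) enum_uniq /=; apply/forallP => x.
  by rewrite (perm_mem H) mem_enum.
case/andP => Hu /forallP Hall; apply: uniq_perm => //; first exact: enum_uniq.
by move=> x; rewrite mem_enum Hall.
Qed.

Lemma big_part (I J : eqType) (r : seq I) (rJ : seq J) (g : I -> J) (P : pred I)
  (F : I -> {poly rat}) : uniq rJ -> (forall i, i \in r -> P i -> g i \in rJ) ->
  \sum_(i <- r | P i) F i = \sum_(j <- rJ) \sum_(i <- r | P i && (g i == j)) F i.
Proof.
move=> Hu Hin.
under [RHS]eq_bigr => j _ do rewrite big_mkcond.
rewrite exchange_big /= big_mkcond big_seq [RHS]big_seq; apply: eq_bigr => i Hi.
case: ifP => HP; last by rewrite big1 // => j _; rewrite andFb.
rewrite -big_mkcond /= -big_filter.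
have -> : [seq j <- rJ | g i == j] = [:: g i].
  rewrite -(filter_pred1_uniq Hu (Hin i Hi HP)); apply: eq_filter => j.
  by rewrite /= eq_sym.
by rewrite big_seq1.
Qed.

Lemma mem_map_cons (T : eqType) (x y : T) s L :
  (x :: s \in map (cons y) L) = (x == y) && (s \in L).
Proof.
apply/mapP/andP => [[s' Hs' [-> ->]]|[/eqP -> Hs]]; first by rewrite eqxx.
by exists s.
Qed.

Section SumT.
Variables P Q : finType.
Local Notation T := (P + Q)%type.

Fixpoint projL (S : seq T) : seq P :=
  match S with [::] => [::] | inl a :: S' => a :: projL S' | inr _ :: S' => projL S' end.
Fixpoint projR (S : seq T) : seq Q :=
  match S with [::] => [::] | inr a :: S' => a :: projR S' | inl _ :: S' => projR S' end.

Lemma mem_projL a S : (a \in projL S) = (inl a \in S).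
Proof. by elim: S => [|[c|c] S IH] //=; rewrite !inE IH. Qed.
Lemma mem_projR a S : (a \in projR S) = (inr a \in S).
Proof. by elim: S => [|[c|c] S IH] //=; rewrite !inE IH. Qed.

Lemma uniq_proj S : uniq S = uniq (projL S) && uniq (projR S).
Proof.
elim: S => [|[c|c] S IH] //=; rewrite IH -?mem_projL -?mem_projR //.
  by rewrite andbA. by rewrite andbCA.
Qed.

Lemma projL_rcons S x : projL (rcons S x) =
  (if x is inl a then rcons (projL S) a else projL S).
Proof. by case: x => a; elim: S => [|[c|c] S IH] //=; rewrite IH. Qed.
Lemma projR_rcons S x : projR (rcons S x) =
  (if x is inr a then rcons (projR S) a else projR S).
Proof. by case: x => a; elim: S => [|[c|c] S IH] //=; rewrite IH. Qed.

Lemma projL_rev S : projL (rev S) = rev (projL S).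
Proof.
elim: S => [|x S IH] //; rewrite rev_cons projL_rcons IH.
by case: x => [a|b] //=; rewrite rev_cons.
Qed.
Lemma projR_rev S : projR (rev S) = rev (projR S).
Proof.
elim: S => [|x S IH] //; rewrite rev_cons projR_rcons IH.
by case: x => [a|b] //=; rewrite rev_cons.
Qed.

Lemma eqinl (x y : P) : (@inl P Q x == inl y) = (x == y). Proof. by []. Qed.
Lemma eqinr (x y : Q) : (@inr P Q x == inr y) = (x == y). Proof. by []. Qed.
Lemma eqinlr (x : P) (y : Q) : (@inl P Q x == inr y) = false. Proof. by []. Qed.
Lemma eqinrl (x : P) (y : Q) : (@inr P Q y == inl x) = false. Proof. by []. Qed.

Lemma index_projL a b S : inl a \in S -> inl b \in S ->
  (index (inl a : T) S < index (inl b : T) S)%N = (index a (projL S) < index b (projL S))%N.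
Proof.
elim: S => [|[c|c] S IH] //=; rewrite !inE ?eqinl ?eqinrl //=.
rewrite ![c == _]eq_sym.
case: (a == c); case: (b == c) => //= Ha Hb.
Qed.

Lemma index_projR a b S : inr a \in S -> inr b \in S ->
  (index (inr a : T) S < index (inr b : T) S)%N = (index a (projR S) < index b (projR S))%N.
Proof.
elim: S => [|[c|c] S IH] //=; rewrite !inE ?eqinr ?eqinlr //=.
rewrite ![c == _]eq_sym.
case: (a == c); case: (b == c) => //= Ha Hb.
Qed.

Variables (leP : rel P) (leQ : rel Q).

Lemma mem_linexts (U : finType) (le : rel U) S :
  (S \in linexts le) = perm_eq S (enum U) && is_linext le S.
Proof. by rewrite mem_filter mem_permutations andbC. Qed.

Lemma linexts_sum S : (S \in linexts (sum_rel leP leQ)) =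
  (projL S \in linexts leP) && (projR S \in linexts leQ).
Proof.
rewrite !mem_linexts !perm_enumP uniq_proj.
case Hu: (uniq (projL S)); case Hv: (uniq (projR S)) => //=; last by rewrite andbF.
have HA : [forall x, x \in S] = [forall x, x \in projL S] && [forall x, x \in projR S].
  apply/forallP/andP => [H|[/forallP H1 /forallP H2]].
    by split; apply/forallP => x; rewrite ?mem_projL ?mem_projR.
  by case=> [a|b]; rewrite -?mem_projL -?mem_projR.
rewrite HA.
case HL: [forall x, x \in projL S]; case HR: [forall x, x \in projR S] => //=; last by rewrite andbF.
move/forallP: HL => HL; move/forallP: HR => HR.
apply/forallP/andP => [H|[/forallP H1 /forallP H2]].
  split; apply/forallP => x; apply/forallP => y; apply/implyP => /andP[nxy lxy].
  - have := forallP (H (inl x)) (inl y); rewrite /= nxy lxy /= index_projL //.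
    by rewrite -mem_projL. by rewrite -mem_projL.
  - have := forallP (H (inr x)) (inr y); rewrite /= nxy lxy /= index_projR //.
    by rewrite -mem_projR. by rewrite -mem_projR.
case=> [a|b]; apply/forallP => [[a'|b']]; apply/implyP => //= /andP[nxy lxy].
  have := forallP (H1 a) a'; rewrite nxy lxy /= index_projL //.
  by rewrite -mem_projL. by rewrite -mem_projL.
have := forallP (H2 b) b'; rewrite nxy lxy /= index_projR //.
by rewrite -mem_projR. by rewrite -mem_projR.
Qed.

End SumT.

Lemma rev_eq (T : eqType) (a b : seq T) : (rev a == b) = (a == rev b).
Proof. by apply/eqP/eqP => [<-|->]; rewrite revK. Qed.

Section SumT2.
Variables P Q : finType.
Local Notation T := (P + Q)%type.

Lemma nil_map_cons (U : eqType) (y : U) L : ([::] \in map (cons y) L) = false.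
Proof. by apply/mapP => [[]]. Qed.

Lemma mem_map_cons' (U : eqType) (x y : U) s L :
  (x :: s \in map (fun t => y :: t) L) = (x == y) && (s \in L).
Proof. exact: mem_map_cons. Qed.

Lemma mem_mapinr (τ : seq Q) (S : seq T) :
  (S == map inr τ) = (projL S == [::]) && (projR S == τ).
Proof.
elim: S τ => [|[c|c] S IH] [|b τ] //=; try by rewrite andbF.
by rewrite eqseq_cons eqinr IH eqseq_cons andbCA.
Qed.

Lemma mem_mapinl (σ : seq P) (S : seq T) :
  (S == map inl σ) = (projL S == σ) && (projR S == [::]).
Proof.
elim: S σ => [|[c|c] S IH] [|b σ] //=; try by rewrite andbF.
by rewrite eqseq_cons eqinl IH eqseq_cons andbA.
Qed.

Lemma mem_shuf_sum (σ : seq P) (τ : seq Q) (S : seq T) :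
  (S \in shuf (map inl σ) (map inr τ)) = (projL S == σ) && (projR S == τ).
Proof.
elim: σ τ S => [|a σ IHs] τ S; first by rewrite shuf0l inE mem_mapinr.
elim: τ S => [|b τ IHt] S.
  by rewrite map_cons shuf0r inE -map_cons mem_mapinl.
rewrite !map_cons shufcc mem_cat.
case: S => [|[c|c] S].
- by rewrite !nil_map_cons.
- rewrite !mem_map_cons eqinl eqinlr andFb orbF -map_cons IHs.
  by rewrite [projL _]/= [projR _]/= eqseq_cons andbA.
rewrite !mem_map_cons eqinr eqinrl andFb orFb -map_cons IHt.
by rewrite [projL _]/= [projR _]/= eqseq_cons andbCA.
Qed.

Lemma shuf_sum_uniq (σ : seq P) (τ : seq Q) : uniq (shuf (map inl σ) (map inr τ)).
Proof.
elim: σ τ => [|a σ IHs] τ; first by rewrite shuf0l.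
elim: τ => [|b τ IHt]; first by rewrite map_cons shuf0r.
rewrite !map_cons shufcc cat_uniq !map_inj_uniq -?map_cons ?IHs ?IHt //=;
  try by move=> x y [].
rewrite andbT; apply/hasPn => r /mapP[r' _ ->]; apply/negP => /mapP[r'' _ H]; by case: H.
Qed.

Lemma last_projL (s : P) (S : seq T) : last (inl s) S = inl s -> last s (projL S) = s.
Proof.
case/lastP: S => [|S x] //=; rewrite last_rcons => ->.
by rewrite projL_rcons last_rcons.
Qed.

Lemma mem_revshuf (s0 : P) σ' τ (S : seq T) :
  (S \in map (fun r => rev (inl s0 :: r)) (shuf (map inl (rev σ')) (map inr (rev τ)))) =
  (last (inl s0) S == inl s0) && (projL S == rcons σ' s0) && (projR S == τ).
Proof.
rewrite -{1}(revK S) (map_comp rev (cons (inl s0))) (mem_map (can_inj (@revK _))).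
rewrite -(revK S) projL_rev projR_rev rev_eq [(rev (projR _)) == _]rev_eq revK.
case: (rev S) => [|x r].
  by rewrite nil_map_cons /= rev_rcons eqxx.
rewrite mem_map_cons' mem_shuf_sum rev_cons last_rcons rev_rcons.
case: eqP => [->|] //=.
by rewrite eqseq_cons eqxx.
Qed.

Lemma linexts_uniq (U : finType) (le : rel U) : uniq (linexts le).
Proof. by rewrite filter_uniq // permutations_uniq. Qed.

Lemma size_linexts (U : finType) (le : rel U) σ : σ \in linexts le -> size σ = #|U|.
Proof. by rewrite mem_linexts => /andP[/perm_size -> _]; rewrite -cardT. Qed.

Variables (leP : rel P) (leQ : rel Q) (lab : T -> nat) (s : P).
Hypotheses (Hinj : injective lab) (Hlt : forall t, (lab (inr t) < lab (inl s))%N).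

Lemma inner σ τ : σ \in linexts leP -> τ \in linexts leQ ->
  \sum_(S <- linexts (sum_rel leP leQ) |
        (last (inl s) S == inl s) && ((projL S, projR S) == (σ, τ))) 'X^(maj lab S)
  = if last s σ == s then
      qb (#|P|.-1 + #|Q|) #|P|.-1 * 'X^(maj (fun x => lab (inl x)) σ)
         * 'X^(maj (fun x => lab (inr x)) τ)
    else 0.
Proof.
move=> Hs Ht.
have szs := size_linexts Hs; have szt := size_linexts Ht.
case: ifP => Hlast; last first.
  rewrite big1 // => S /andP[/eqP HS /eqP [HL HR]].
  by move: Hlast; rewrite -HL (last_projL HS) eqxx.
have P0 : (0 < #|P|)%N by apply/card_gt0P; exists s.
move: Hs Hlast szs; case/lastP: σ => [|σ' x]; first by move=> _ _ /= E; rewrite -E in P0.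
rewrite last_rcons size_rcons => Hs /eqP Exs szs; subst x.
have Hperm : perm_eq
   [seq S <- linexts (sum_rel leP leQ) |
        (last (inl s) S == inl s) && ((projL S, projR S) == (rcons σ' s, τ))]
   (map (fun r => rev (inl s :: r)) (shuf (map inl (rev σ')) (map inr (rev τ)))).
  apply: uniq_perm.
  - by rewrite filter_uniq // linexts_uniq.
  - rewrite map_inj_uniq ?shuf_sum_uniq //.
    by move=> r1 r2 /(can_inj (@revK _)) [].
  move=> S; rewrite mem_filter mem_revshuf linexts_sum xpair_eqE.
  case: (last (inl s) S == inl s) => //=.
  case: eqP => [->|] /=; last by [].
  case: eqP => [->|] /=; last by [].
  by rewrite Hs Ht.
rewrite -big_filter (perm_big _ Hperm) big_map.
under eq_bigr do rewrite maj_rmaj revK map_cons.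
rewrite -(big_map (map lab) xpredT (fun r => 'X^(rmaj (lab (inl s) :: r)))) -map_shuf.
rewrite shuf_main; last first.
  rewrite -map_cat -map_cons map_inj_uniq // cons_uniq cat_uniq.
  have : uniq (rcons σ' s) by move: Hs; rewrite mem_linexts perm_enumP => /andP[/andP[]].
  rewrite rcons_uniq => /andP[ns us].
  rewrite mem_cat (mem_map (@inl_inj P Q)) mem_rev (negbTE ns) /=.
  rewrite !map_inj_uniq ?rev_uniq ?us //; try by move=> ? ? [].
  have ut : uniq τ by move: Ht; rewrite mem_linexts perm_enumP => /andP[/andP[]].
  rewrite ut andbT /=; apply/andP; split.
    by apply/mapP => [[t _]].
  by apply/hasPn => y /mapP[t _ ->]; apply/mapP => [[t' _]].
have Z : (size [seq lab i | i <- [seq inr i | i <- rev τ]] *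
      (lab (inl s) < head 0%N [seq lab i | i <- [seq inr i | i <- rev τ]]) = 0)%N.
  by case: (rev τ) => [|t r] //=; rewrite ltnNge (ltnW (Hlt t)) muln0.
rewrite Z addn0 !size_map !size_rev szt -szs /= -mulrA -exprD.
rewrite !maj_rmaj rev_rcons map_cons rmajE size_map size_rev -!map_comp.
congr (_ * 'X^_).
change (fun x : P => lab (inl x)) with (lab \o inl).
change (fun x : Q => lab (inr x)) with (lab \o inr).
lia.
Qed.
End SumT2.

Unset Implicit Arguments.
Set Strict Implicit.

Theorem corollary3p5 (P Q : finType) (leP : rel P) (leQ : rel Q)
  (n : nat) (omega : (P + Q)%type -> 'I_n) (s : P) :
  is_poset leP -> is_poset leQ -> bijective omega ->
  (forall t : Q, (val (omega (inr t)) < val (omega (inl s)))%N) ->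
  emaj_end (sum_rel leP leQ) (fun x => val (omega x)) (inl s) =
    qbinom n.-1 (#|P|.-1)
    * emaj_end leP (std (fun x : P => val (omega (inl x)))) s
    * emaj leQ (std (fun x : Q => val (omega (inr x)))).
Proof.
move=> _ _ Hbij Hlt.
have Hinj : injective (fun x => val (omega x)).
  by move=> x y /val_inj; exact: (bij_inj Hbij).
have Hn : n = (#|P| + #|Q|)%N by rewrite -card_sum (bij_eq_card Hbij) card_ord.
have P0 : (0 < #|P|)%N by apply/card_gt0P; exists s.
rewrite qbinom_qb; last by rewrite Hn; lia.
have -> : n.-1 = (#|P|.-1 + #|Q|)%N by rewrite Hn; lia.
rewrite /emaj_end /emaj.
rewrite (@big_part _ _ _ [seq (σ, τ) | σ <- linexts leP, τ <- linexts leQ]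
          (fun S => (projL S, projR S))); last first.
- move=> S; rewrite linexts_sum => /andP[H1 H2] _.
  by apply: allpairs_f.
- rewrite allpairs_uniq ?linexts_uniq //.
  by move=> [? ?] [? ?] _ _ [-> ->].
rewrite big_allpairs.
set lP := (fun x : P => val (omega (inl x))).
set lQ := (fun x : Q => val (omega (inr x))).
have -> : qb (#|P|.-1 + #|Q|) #|P|.-1 *
    (\sum_(σ <- linexts leP | last s σ == s) 'X^(maj (std lP) σ)) *
    (\sum_(τ <- linexts leQ) 'X^(maj (std lQ) τ)) =
  \sum_(σ <- linexts leP) \sum_(τ <- linexts leQ)
    (if last s σ == s then qb (#|P|.-1 + #|Q|) #|P|.-1 * 'X^(maj lP σ) * 'X^(maj lQ τ)
     else 0).
  rewrite big_mkcond -mulrA big_distrl big_distrr /=; apply: eq_bigr => σ _.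
  case: ifP => _; last by rewrite mul0r mulr0 big1.
  rewrite big_distrr big_distrr /=; apply: eq_bigr => τ _.
  by rewrite !maj_std mulrA.
rewrite big_seq [RHS]big_seq; apply: eq_bigr => σ Hs.
rewrite big_seq [RHS]big_seq; apply: eq_bigr => τ Ht.
exact: (inner Hinj Hlt Hs Ht).
Qed.
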